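(* Let $R$ be a unital amenable affine algebra over a field $K$, with a fixed Følner exhaustion $\{W_n\}$ and ultralimit $\lim_\omega$. If $M$ is a submodule of a finitely generated left $R$-module $N$ with $M$ finitely generated, then $$\mathrm{rank}(N)\ge\mathrm{rank}(N/M)+\mathrm{rank}(M).$$
   Context: An affine algebra is a finitely generated associative algebra over $K$. A Følner exhaustion is a sequence of finite-dimensional $K$-subspaces $W_1\subseteq W_2\subseteq\cdots$ with $\bigcup_nW_n=R$ such that for every $r\in R$, $\lim_{n\to\infty}\dim_K(W_nr+W_n)/\dim_K(W_n)=1$; $R$ is amenable if one exists. $\lim_\omega$ is the ultralimit along an ultrafilter $\omega$ on $\mathbb N$ (a linear functional on bounded sequences with $\liminf\le\lim_\omega\le\limsup$, equal to the limit on convergent sequences). For a finitely generated module $P=\sum_{i=1}^sRy_i$, $\mathrm{rank}(P)=\lim_\omega\dim_K(\sum_iW_ny_i)/\dim_K(W_n)$ (independent of the generators). *)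

(* Defs.v *)
From HB Require Import structures.
From mathcomp Require Import all_boot all_order all_algebra.
From mathcomp Require Import boolp reals.
Set Implicit Arguments. Unset Strict Implicit. Unset Printing Implicit Defensive.
Import Order.TTheory GRing.Theory Num.Theory.
Local Open Scope ring_scope.

Section KLin.
Variables (K : fieldType) (V : zmodType) (sc : K -> V -> V).

Definition in_Kspan (s : seq V) (x : V) : Prop :=
  exists c : seq K, size c = size s /\ x = \sum_(i < size s) sc c`_i s`_i.

Definition Kfree (s : seq V) : Prop :=
  forall c : seq K, size c = size s ->
    \sum_(i < size s) sc c`_i s`_i = 0 -> forall i, c`_i = 0.

(* dim_K of the K-span of s = maximal size of a K-independent subfamily *)
Definition dim_span (s : seq V) : nat :=
  \max_(m : (size s).-tuple bool | `[< Kfree (mask m s) >]) size (mask m s).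
End KLin.

Inductive gen_alg (K : fieldType) (R : algType K) (g : seq R) : R -> Prop :=
  | ga_gen x : x \in g -> gen_alg g x
  | ga_one : gen_alg g 1
  | ga_add x y : gen_alg g x -> gen_alg g y -> gen_alg g (x + y)
  | ga_mul x y : gen_alg g x -> gen_alg g y -> gen_alg g (x * y)
  | ga_scale (k : K) x : gen_alg g x -> gen_alg g (k *: x).

Definition affine (K : fieldType) (R : algType K) : Prop :=
  exists g : seq R, forall r : R, gen_alg g r.

(* ---------- Folner exhaustions; W n is the K-span of the seq W n ---------- *)
Definition ratio (Rl : realType) (a b : nat) : Rl := a%:R / b%:R.

Definition folner_exhaustion (K : fieldType) (R : algType K) (Rl : realType)
    (W : nat -> seq R) : Prop :=
  [/\ (forall n x, in_Kspan *:%R (W n) x -> in_Kspan *:%R (W n.+1) x),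
      (forall r : R, exists n, in_Kspan *:%R (W n) r) &
      (forall r : R, forall e : Rl, 0 < e -> exists n0, forall n, (n0 <= n)%N ->
         `| ratio Rl (dim_span *:%R ([seq w * r | w <- W n] ++ W n))
                      (dim_span *:%R (W n)) - 1 | < e)].

Definition amenable (K : fieldType) (R : algType K) (Rl : realType) : Prop :=
  exists W : nat -> seq R, folner_exhaustion Rl W.

Record ultrafilter_nat (U : (nat -> Prop) -> Prop) : Prop := {
  uf_full : U (fun _ => True);
  uf_proper : ~ U (fun _ => False);
  uf_up : forall A B : nat -> Prop, (forall n, A n -> B n) -> U A -> U B;
  uf_cap : forall A B : nat -> Prop, U A -> U B -> U (fun n => A n /\ B n);
  uf_ultra : forall A : nat -> Prop, U A \/ U (fun n => ~ A n);
  uf_free : forall m : nat, U (fun n => (m <= n)%N) }.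

Definition is_ulim (Rl : realType) (U : (nat -> Prop) -> Prop) (a : nat -> Rl)
    (l : Rl) : Prop :=
  forall e : Rl, 0 < e -> U (fun n => `|a n - l| < e).

Section Mod.
Variables (K : fieldType) (R : algType K) (N : lmodType R).

Definition Kscale (k : K) (x : N) : N := k%:A *: x.

Definition in_Rspan (ys : seq N) (x : N) : Prop :=
  exists rs : seq R, size rs = size ys /\ x = \sum_(i < size ys) rs`_i *: ys`_i.

Definition generates (ys : seq N) : Prop := forall x : N, in_Rspan ys x.

Definition is_submodule (M : N -> Prop) : Prop :=
  [/\ M 0, (forall x y, M x -> M y -> M (x + y)) &
      (forall (r : R) x, M x -> M (r *: x))].

Definition generates_sub (M : N -> Prop) (ys : seq N) : Prop :=
  (forall y, y \in ys -> M y) /\ (forall x, M x <-> in_Rspan ys x).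

(* spanning family of  \sum_i W y_i  (as a K-space) *)
Definition Wmul (Wn : seq R) (ys : seq N) : seq N :=
  [seq w *: y | w <- Wn, y <- ys].

(* the sequence  dim_K(\sum_i W_n y_i) / dim_K(W_n)  whose ultralimit is rank *)
Definition rank_seq (Rl : realType) (W : nat -> seq R) (ys : seq N) : nat -> Rl :=
  fun n => ratio Rl (dim_span Kscale (Wmul (W n) ys)) (dim_span *:%R (W n)).
End Mod.

(* R-linear surjection with kernel M: identifies Q with N/M *)
Definition is_quotient_map (K : fieldType) (R : algType K) (N Q : lmodType R)
    (M : N -> Prop) (pi : N -> Q) : Prop :=
  [/\ (forall x y, pi (x + y) = pi x + pi y),
      (forall (r : R) x, pi (r *: x) = r *: pi x),
      (forall q : Q, exists x, pi x = q) &
      (forall x, pi x = 0 <-> M x)].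

(* Main.v *)
Require Import Defs.
From HB Require Import structures.
From mathcomp Require Import all_boot all_order all_algebra.
From mathcomp Require Import boolp reals.
From mathcomp Require Import lra.
Set Implicit Arguments. Unset Strict Implicit. Unset Printing Implicit Defensive.
Import Order.TTheory GRing.Theory Num.Theory.
Local Open Scope ring_scope.


Record vsax (K : fieldType) (V : zmodType) (sc : K -> V -> V) : Prop := VSax {
  ax_Dr : forall a x y, sc a (x + y) = sc a x + sc a y;
  ax_Dl : forall a b x, sc (a + b) x = sc a x + sc b x;
  ax_A : forall a b x, sc (a * b) x = sc a (sc b x);
  ax_1 : forall x, sc 1 x = x }.

Section Lin.
Variables (K : fieldType) (V : zmodType) (sc : K -> V -> V).
Hypothesis ax : vsax sc.
Let scDr := ax_Dr ax.
Let scDl := ax_Dl ax.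
Let scA := ax_A ax.
Let sc1 := ax_1 ax.

Lemma sc0 x : sc 0 x = 0.
Proof. have _ := (scDr, scDl, scA, sc1). have h := scDl 0 0 x; rewrite addr0 in h.
by apply: (addrI (sc 0 x)); rewrite -h addr0. Qed.

Lemma scr0 a : sc a 0 = 0.
Proof. have _ := (scDr, scDl, scA, sc1). have h := scDr a 0 0; rewrite addr0 in h.
by apply: (addrI (sc a 0)); rewrite -h addr0. Qed.

Lemma scN1 x : sc (-1) x = - x.
Proof. have _ := (scDr, scDl, scA, sc1). have h := scDl 1 (-1) x; rewrite subrr sc0 sc1 in h.
by apply: (addrI x); rewrite -h subrr. Qed.

Lemma sc_sumr a I (r : seq I) (P : pred I) (F : I -> V) :
  sc a (\sum_(i <- r | P i) F i) = \sum_(i <- r | P i) sc a (F i).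
Proof. have _ := (scDr, scDl, scA, sc1). exact: (big_morph (sc a) (scDr a) (scr0 a)). Qed.

Lemma sc_suml x I (r : seq I) (P : pred I) (F : I -> K) :
  sc (\sum_(i <- r | P i) F i) x = \sum_(i <- r | P i) sc (F i) x.
Proof. have _ := (scDr, scDl, scA, sc1). exact: (big_morph (sc^~ x) (fun a b => scDl a b x) (sc0 x)). Qed.

Definition lc (c : seq K) (s : seq V) := \sum_(i < size s) sc c`_i s`_i.

Lemma lc_nil c : lc c [::] = 0.
Proof. have _ := (scDr, scDl, scA, sc1). by rewrite /lc big_ord0. Qed.

Lemma lc_cons c x s : lc c (x :: s) = sc c`_0 x + lc (behead c) s.
Proof. have _ := (scDr, scDl, scA, sc1).
rewrite /lc big_ord_recl /=; congr (_ + _); apply: eq_bigr => i _.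
by rewrite nth_behead.
Qed.

Lemma lc_ext c c' s : (forall i, (i < size s)%N -> c`_i = c'`_i) -> lc c s = lc c' s.
Proof. have _ := (scDr, scDl, scA, sc1). by move=> h; apply: eq_bigr => i _; rewrite (h i). Qed.

Lemma lc_cat c s1 s2 : lc c (s1 ++ s2) = lc c s1 + lc (drop (size s1) c) s2.
Proof. have _ := (scDr, scDl, scA, sc1).
elim: s1 c => [|x s1 IH] c /=; first by rewrite lc_nil add0r drop0.
rewrite !lc_cons IH addrA; congr (_ + lc _ _).
by case: c.
Qed.

Lemma lc_zero c s : (forall i, c`_i = 0) -> lc c s = 0.
Proof. have _ := (scDr, scDl, scA, sc1). by move=> h; apply: big1 => i _; rewrite h sc0. Qed.

Lemma lc_zerov c s : (forall x, x \in s -> x = 0) -> lc c s = 0.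
Proof. have _ := (scDr, scDl, scA, sc1). by move=> h; apply: big1 => i _; rewrite (h s`_i) ?scr0 // mem_nth. Qed.

Lemma spanP s x : (exists c, x = lc c s) -> in_Kspan sc s x.
Proof. have _ := (scDr, scDl, scA, sc1).
case=> c ->; exists (mkseq (fun i => c`_i) (size s)); split; first by rewrite size_mkseq.
by apply: lc_ext => i hi; rewrite nth_mkseq.
Qed.

Lemma span0 s : in_Kspan sc s 0.
Proof. have _ := (scDr, scDl, scA, sc1). by apply: spanP; exists [::]; rewrite lc_zero // => i; rewrite nth_nil. Qed.

Lemma spanD s x y : in_Kspan sc s x -> in_Kspan sc s y -> in_Kspan sc s (x + y).
Proof. have _ := (scDr, scDl, scA, sc1).
case=> c1 [_ ->] [c2 [_ ->]]; apply: spanP.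
exists (mkseq (fun i => c1`_i + c2`_i) (size s)).
rewrite /lc -big_split /=; apply: eq_bigr => i _.
by rewrite nth_mkseq // scDl.
Qed.

Lemma spanZ s a x : in_Kspan sc s x -> in_Kspan sc s (sc a x).
Proof. have _ := (scDr, scDl, scA, sc1).
case=> c [_ ->]; apply: spanP.
exists (mkseq (fun i => a * c`_i) (size s)).
rewrite /lc sc_sumr; apply: eq_bigr => i _.
by rewrite nth_mkseq // scA.
Qed.

Lemma spanN s x : in_Kspan sc s x -> in_Kspan sc s (- x).
Proof. have _ := (scDr, scDl, scA, sc1). by move=> h; rewrite -scN1; apply: spanZ. Qed.

Lemma span_mem s x : x \in s -> in_Kspan sc s x.
Proof. have _ := (scDr, scDl, scA, sc1).
move=> hx; apply: spanP; set j := index x s.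
have hj : (j < size s)%N by rewrite index_mem.
exists (mkseq (fun i => (i == j)%:R) (size s)).
rewrite /lc (bigD1 (Ordinal hj)) //= nth_mkseq // eqxx sc1 nth_index //.
rewrite big1 ?addr0 // => i hi; rewrite nth_mkseq //.
have -> : (nat_of_ord i == j) = false.
  by apply/negbTE; apply: contra hi => /eqP h; apply/eqP/val_inj.
by rewrite sc0.
Qed.

Lemma span_ind (P : V -> Prop) s x : P 0 -> (forall x y, P x -> P y -> P (x + y)) ->
  (forall a x, P x -> P (sc a x)) -> (forall x, x \in s -> P x) ->
  in_Kspan sc s x -> P x.
Proof. have _ := (scDr, scDl, scA, sc1).
move=> h0 hD hZ hm [c [_ ->]].
apply: (big_ind P) => // i _; apply: hZ; apply: hm; exact: mem_nth.
Qed.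

Lemma span_trans s t x : (forall y, y \in s -> in_Kspan sc t y) ->
  in_Kspan sc s x -> in_Kspan sc t x.
Proof. have _ := (scDr, scDl, scA, sc1).
move=> h; apply: span_ind => //; [exact: span0|exact: spanD|exact: spanZ].
Qed.

Lemma span_sub s t x : {subset s <= t} -> in_Kspan sc s x -> in_Kspan sc t x.
Proof. have _ := (scDr, scDl, scA, sc1). by move=> h; apply: span_trans => y /h; apply: span_mem. Qed.

Lemma lc_span c s : in_Kspan sc s (lc c s).
Proof. have _ := (scDr, scDl, scA, sc1). by apply: spanP; exists c. Qed.

Lemma free_rcons a x : Kfree sc a -> ~ in_Kspan sc a x -> Kfree sc (rcons a x).
Proof. have _ := (scDr, scDl, scA, sc1).
move=> hf hx c hc h0 i; rewrite size_rcons in hc.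
rewrite -/(lc c (rcons a x)) in h0.
rewrite -cats1 lc_cat lc_cons lc_nil addr0 nth_drop addn0 in h0.
set k := c`_(size a) in h0.
have [k0|kn0] := eqVneq k 0.
  rewrite k0 sc0 addr0 in h0.
  have ht : lc (take (size a) c) a = 0 by rewrite -h0; apply: lc_ext => j hj; rewrite nth_take.
  have := hf (take (size a) c); rewrite size_take hc ltnSn => /(_ erefl ht) hz.
  have [ia|] := ltnP i (size a); first by have := hz i; rewrite nth_take.
  rewrite leq_eqVlt => /orP [/eqP <- //|hi].
  by rewrite nth_default // hc.
exfalso; apply: hx.
have -> : x = sc k^-1 (- lc c a).
  have -> : - lc c a = sc k x by apply/eqP; rewrite eq_sym -subr_eq0 opprK addrC h0.
  by rewrite -scA mulVf // sc1.
by apply: spanZ; apply: spanN; apply: lc_span.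
Qed.


Lemma steinitz u s : Kfree sc u -> (forall y, y \in u -> in_Kspan sc s y) ->
  (size u <= size s)%N.
Proof. have _ := (scDr, scDl, scA, sc1).
move=> hf hs; rewrite leqNgt; apply/negP => hlt.
have hex : forall j : 'I_(size u), exists c : seq K, u`_j = lc c s.
  move=> j; have [c [_ ->]] := hs _ (mem_nth 0 (ltn_ord j)); by exists c.
have [f hfj] := choice hex.
pose A : 'M[K]_(size u, size s) := \matrix_(j, i) (f j)`_i.
have hk : (0 < \rank (kermx A))%N.
  by rewrite mxrank_ker subn_gt0; apply: leq_ltn_trans (rank_leq_col A) hlt.
have [i hi] : exists i, row i (kermx A) != 0.
  case: (pickP (fun i => row i (kermx A) != 0)) => [i h|h]; first by exists i.
  exfalso; move: hk; rewrite lt0n mxrank_eq0 => /negP; apply.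
  apply/eqP/row_matrixP => i; rewrite row0; exact/eqP/negbFE/h.
set v := row i (kermx A) in hi.
have hvA : v *m A = 0 by rewrite /v -row_mul mulmx_ker row0.
pose c := mkseq (fun j => v 0 (insubd i j)) (size u).
have e : forall j : 'I_(size u), insubd i (j : nat) = j.
  by move=> j; apply: val_inj; rewrite val_insubd ltn_ord.
have hc0 : lc c u = 0.
  rewrite /lc.
  transitivity (\sum_(j < size u) \sum_(i0 < size s) sc (v 0 j * A j i0) s`_i0).
    apply: eq_bigr => j _; rewrite hfj /lc sc_sumr; apply: eq_bigr => i0 _.
    by rewrite nth_mkseq // (e j) scA /A !mxE.
  rewrite exchange_big /=; apply: big1 => i0 _.
  rewrite -sc_suml.
  have -> : \sum_(j < size u) v 0 j * A j i0 = (v *m A) 0 i0 by rewrite mxE.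
  by rewrite hvA mxE sc0.
have hz := hf c (size_mkseq _ _) hc0.
move/negP: hi; apply; apply/eqP/rowP => j; have := hz j.
rewrite nth_mkseq // (e j) => h; rewrite /v in h *; rewrite !mxE in h *; exact: h.
Qed.

Lemma greedy B : forall a, Kfree sc a -> exists m : seq bool, size m = size B /\
  Kfree sc (a ++ mask m B) /\ forall x, x \in B -> in_Kspan sc (a ++ mask m B) x.
Proof. have _ := (scDr, scDl, scA, sc1).
elim: B => [|x B IH] a hf.
  by exists [::]; rewrite cats0; split=> //; split=> // x.
have [hx|hx] := pselect (in_Kspan sc a x).
  have [m [hm [hf' hs]]] := IH a hf.
  exists (false :: m); rewrite /= hm; split=> //; split=> // y.
  rewrite inE => /orP [/eqP ->|/hs //].
  by apply: span_sub hx => z hz; rewrite mem_cat hz.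
have [m [hm [hf' hs]]] := IH _ (free_rcons hf hx).
exists (true :: m); rewrite /= hm -cat_rcons; split=> //; split=> // y.
rewrite inE => /orP [/eqP ->|/hs //].
by apply: span_mem; rewrite mem_cat mem_rcons mem_head.
Qed.

Lemma dim_le (t g : seq V) : (forall x, x \in t -> in_Kspan sc g x) -> (Defs.dim_span sc t <= size g)%N.
Proof. have _ := (scDr, scDl, scA, sc1).
move=> h; apply/bigmax_leqP => m /asboolP hf.
apply: steinitz hf _ => y hy; apply: h; exact: (mem_mask hy).
Qed.

Lemma basis0 (s : seq V) : exists m : seq bool, size m = size s /\ Kfree sc (mask m s) /\
  forall x, x \in s -> in_Kspan sc (mask m s) x.
Proof. have _ := (scDr, scDl, scA, sc1).
have hf0 : Kfree sc [::] by move=> [|? ?] // _ _ i; rewrite nth_nil.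
by have [m [hm [hf hs]]] := greedy s hf0; exists m.
Qed.

Lemma dim_ge (u t : seq V) : Kfree sc u -> (forall x, x \in u -> in_Kspan sc t x) ->
  (size u <= Defs.dim_span sc t)%N.
Proof. have _ := (scDr, scDl, scA, sc1).
move=> hf hu; have [m [hm [hfm hs]]] := basis0 t.
apply: (leq_trans (steinitz hf _)).
  move=> y /hu; apply: span_trans => z; exact: hs.
have hm' : size m == size t by rewrite hm.
have := @leq_bigmax_cond _ (fun m : (size t).-tuple bool => `[< Kfree sc (mask m t) >])
   (fun m : (size t).-tuple bool => size (mask m t)) (Tuple hm') (asboolT hfm).
by [].
Qed.

Lemma basis (s : seq V) : exists m : seq bool, [/\ Kfree sc (mask m s),
  (forall x, x \in s -> in_Kspan sc (mask m s) x) & size (mask m s) = Defs.dim_span sc s].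
Proof. have _ := (scDr, scDl, scA, sc1).
have [m [hm [hf hs]]] := basis0 s; exists m; split=> //.
apply/eqP; rewrite eqn_leq dim_le // dim_ge // => x hx.
apply: span_mem; exact: mem_mask hx.
Qed.

Lemma dim_mono (t g : seq V) : (forall x, x \in t -> in_Kspan sc g x) ->
  (Defs.dim_span sc t <= Defs.dim_span sc g)%N.
Proof. have _ := (scDr, scDl, scA, sc1).
move=> h; have [m [hf hs <-]] := basis t.
apply: dim_ge hf _ => x hx; apply: h; exact: mem_mask hx.
Qed.

Lemma dim_cat_le (X Y : seq V) : (Defs.dim_span sc (X ++ Y) <= Defs.dim_span sc X + size Y)%N.
Proof. have _ := (scDr, scDl, scA, sc1).
have [m [hf hs <-]] := basis X; rewrite -size_cat; apply: dim_le => x.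
rewrite mem_cat => /orP [/hs|hx].
  by apply: span_sub => z hz; rewrite mem_cat hz.
by apply: span_mem; rewrite mem_cat hx orbT.
Qed.

End Lin.


Section KS.
Variables (K : fieldType) (R : algType K) (N : lmodType R).
Lemma KDr a (x y : N) : Kscale a (x + y) = Kscale a x + Kscale a y.
Proof. by rewrite /Kscale scalerDr. Qed.
Lemma KDl a b (x : N) : Kscale (a + b) x = Kscale a x + Kscale b x.
Proof. by rewrite /Kscale scalerDl scalerDl. Qed.
Lemma KA a b (x : N) : Kscale (a * b) x = Kscale a (Kscale b x).
Proof. by rewrite /Kscale scalerA; congr (_ *: _); rewrite mulr_algl scalerA. Qed.
Lemma K1 (x : N) : Kscale 1 x = x.
Proof. by rewrite /Kscale scale1r scale1r. Qed.
Lemma RDr a (x y : R) : a *: (x + y) = a *: x + a *: y.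
Proof. exact: scalerDr. Qed.
Lemma RDl a b (x : R) : (a + b) *: x = a *: x + b *: x.
Proof. exact: scalerDl. Qed.
Lemma RA a b (x : R) : (a * b) *: x = a *: (b *: x).
Proof. by rewrite scalerA. Qed.
Lemma R1 (x : R) : 1 *: x = x.
Proof. exact: scale1r. Qed.
Lemma axK : vsax (@Kscale K R N).
Proof. by split; [exact: KDr|exact: KDl|exact: KA|exact: K1]. Qed.
Lemma axRR : vsax ( *:%R : K -> R -> R).
Proof. by split; [exact: RDr|exact: RDl|exact: RA|exact: R1]. Qed.
End KS.

Section Main.
Variables (K : fieldType) (R : algType K) (N Q : lmodType R) (pi : N -> Q).
Hypotheses (piD : forall x y, pi (x + y) = pi x + pi y)
  (piZ : forall (r : R) x, pi (r *: x) = r *: pi x).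
Variables (Wn rs : seq R) (ys : seq N) (qs : seq Q) (zs : seq N).

Definition good (x : N) := exists c : seq R, [/\ size c = size ys, {subset c <= rs} &
  x = \sum_(i < size ys) c`_i *: ys`_i].

Hypotheses (hzg : forall z, z \in zs -> good z /\ pi z = 0)
  (hqg : forall q, q \in qs -> exists x, good x /\ pi x = q).

Local Notation KsN := (@Kscale K R N).
Local Notation KsQ := (@Kscale K R Q).
Local Notation axN := (@axK K R N).
Local Notation axQ := (@axK K R Q).
Local Notation axR := (@axRR K R).

Definition Fr (r : R) := [seq w * r | w <- Wn].
Definition G := Wn ++ flatten [seq Fr r | r <- rs].
Definition T := Wmul G ys.

Lemma pi0 : pi 0 = 0.
Proof. have := piD 0 0; rewrite addr0 => h; apply: (addrI (pi 0)); by rewrite -h addr0. Qed.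

Lemma piK a x : pi (Kscale a x) = Kscale a (pi x).
Proof. by rewrite /Kscale piZ. Qed.

Lemma pi_lc c s : pi (lc KsN c s) = lc KsQ c (map pi s).
Proof.
rewrite /lc size_map (big_morph pi piD pi0); apply: eq_bigr => i _.
by rewrite piK (nth_map 0).
Qed.

Lemma good_span x w : good x -> w \in Wn -> in_Kspan KsN T (w *: x).
Proof.
case=> c [hc hsub ->] hw; rewrite scaler_sumr.
apply: (big_ind (in_Kspan KsN T)).
- exact: (span0 axN).
- exact: (spanD axN).
move=> i _; rewrite scalerA.
apply: (span_mem axN).
apply: (allpairs_f (fun w y => w *: y)); last by apply: mem_nth.
rewrite mem_cat; apply/orP; right; apply/flattenP; exists (Fr c`_i).
  by apply: map_f; apply: hsub; apply: mem_nth; rewrite hc.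
by apply: map_f.
Qed.

Lemma list_pre (P : N -> Prop) (s : seq Q) :
  (forall x, x \in s -> exists p, P p /\ pi p = x) ->
  exists ps, (forall p, p \in ps -> P p) /\ map pi ps = s.
Proof.
elim: s => [|x s IH] h; first by exists [::].
have [p [hp hpx]] := h x (mem_head _ _).
case: IH => [y hy|ps [hps hm]]; first by apply: h; rewrite inE hy orbT.
exists (p :: ps); split; last by rewrite /= hpx hm.
by move=> y; rewrite inE => /orP [/eqP -> //|]; exact: hps.
Qed.

Lemma rank_nullity :
  (Defs.dim_span (@Kscale K R Q) (Wmul Wn qs) + Defs.dim_span (@Kscale K R N) (Wmul Wn zs)
     <= Defs.dim_span (@Kscale K R N) T)%N.
Proof.
have [mq [fq sq eq]] := (basis axQ) (Wmul Wn qs).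
have [mz [fz sz ez]] := (basis axN) (Wmul Wn zs).
rewrite -eq -ez.
set bq := mask mq (Wmul Wn qs) in fq sq *.
set bz := mask mz (Wmul Wn zs) in fz sz *.
have hpre : forall x, x \in bq -> exists p, in_Kspan KsN T p /\ pi p = x.
  move=> x /mem_mask /allpairsP [[w q] [/= hw hq ->]].
  have [x0 [hg <-]] := hqg hq.
  by exists (w *: x0); split; [exact: good_span | rewrite piZ].
have [ps [hps hmap]] := list_pre hpre.
have hbz0 : forall x, x \in bz -> pi x = 0.
  move=> x /mem_mask /allpairsP [[w z] [/= hw hz ->]].
  by rewrite piZ (hzg hz).2 scaler0.
have hbzT : forall x, x \in bz -> in_Kspan KsN T x.
  move=> x /mem_mask /allpairsP [[w z] [/= hw hz ->]].
  exact: good_span (hzg hz).1 hw.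
have hsz : size ps = size bq by rewrite -hmap size_map.
rewrite -hsz -size_cat.
apply: (dim_ge axN); last first.
  by move=> x; rewrite mem_cat => /orP [/hps|/hbzT].
move=> c hc h0 i.
change (lc KsN c (ps ++ bz) = 0) in h0.
rewrite (lc_cat axN) in h0.
have h1 : lc KsQ (take (size bq) c) bq = 0.
  have := congr1 pi h0; rewrite piD !pi_lc pi0 hmap.
  rewrite [lc KsQ _ (map pi bz)](lc_zerov axQ).
    rewrite addr0 => <-; apply: (lc_ext axQ) => j hj; by rewrite nth_take.
  by move=> x /mapP [y hy ->]; apply: hbz0.
have hc1 : size (take (size bq) c) = size bq.
  by rewrite size_take hc size_cat -hsz; case: ltngtP => //; rewrite ltnNge leq_addr.
have hz1 := fq _ hc1 h1.
have h2 : lc KsN (drop (size ps) c) bz = 0.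
  have e : lc KsN c ps = 0.
    rewrite ((lc_ext axN) c (take (size bq) c)); last by move=> j hj; rewrite nth_take // -hsz.
    by apply: (lc_zero axN).
  by rewrite e add0r in h0.
have hc2 : size (drop (size ps) c) = size bz by rewrite size_drop hc size_cat addKn.
have hz2 := fz _ hc2 h2.
have [hi|hi] := ltnP i (size ps).
  by have := hz1 i; rewrite nth_take // -hsz.
by have := hz2 (i - size ps)%N; rewrite nth_drop subnKC.
Qed.


Local Notation dR := (Defs.dim_span ( *:%R : K -> R -> R)).

Lemma lin_mul (g : seq R) e y : in_Kspan *:%R g e -> y \in ys ->
  in_Kspan KsN (Wmul g ys) (e *: y).
Proof.
move=> he hy; apply: (span_ind axR (P := fun e => in_Kspan KsN (Wmul g ys) (e *: y))) he.
- by rewrite scale0r; apply: (span0 axN).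
- by move=> u v hu hv; rewrite scalerDl; apply: (spanD axN).
- move=> a u hu.
  have -> : (a *: u) *: y = KsN a (u *: y) by rewrite /Kscale scalerA mulr_algl.
  exact: (spanZ axN).
move=> u hu; apply: (span_mem axN).
exact: (allpairs_f (fun w y => w *: y)).
Qed.

Lemma ext_all (a : seq R) : Kfree *:%R a -> {subset a <= Wn} ->
  size a = dR Wn -> forall rl : seq R,
  exists fb : seq R, (size fb <= \sum_(r <- rl) (dR (Fr r ++ Wn) - dR Wn))%N /\
    forall r, r \in rl -> forall x, x \in Fr r -> in_Kspan *:%R (a ++ fb) x.
Proof.
move=> fa asub ea; elim=> [|r rl [fb' [hs hsp]]]; first by exists [::]; split=> // r.
have [m [hm [hf hsp2]]] := greedy axR (Fr r) fa.
set b := mask m (Fr r) in hf hsp2.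
have hb : (size b <= dR (Fr r ++ Wn) - dR Wn)%N.
  have h : (size (a ++ b) <= dR (Fr r ++ Wn))%N.
    apply: (dim_ge axR hf) => x; rewrite mem_cat => /orP [/asub hx|/mem_mask hx];
      by apply: (span_mem axR); rewrite mem_cat hx ?orbT.
  rewrite size_cat ea in h.
  by rewrite -(addKn (dR Wn) (size b)) leq_sub2r.
exists (b ++ fb'); split.
  by rewrite size_cat big_cons leq_add.
move=> r'; rewrite inE => /orP [/eqP -> x hx|hr' x hx].
  apply: (span_sub axR _ (hsp2 x hx)) => z; rewrite !mem_cat => /orP [->//|->].
  by rewrite orbT.
apply: (span_sub axR _ (hsp r' hr' x hx)) => z; rewrite !mem_cat => /orP [->//|->].
by rewrite !orbT.
Qed.

Lemma dimT_le : (Defs.dim_span KsN T <= Defs.dim_span KsN (Wmul Wn ys) +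
   size ys * \sum_(r <- rs) (dR (Fr r ++ Wn) - dR Wn))%N.
Proof.
have [ma [fa sa ea]] := basis axR Wn.
set a := mask ma Wn in fa sa ea.
have asub : {subset a <= Wn} by move=> x /mem_mask.
have [fb [hfs hfsp]] := ext_all fa asub ea rs.
have hG : forall e, e \in G -> in_Kspan *:%R (a ++ fb) e.
  move=> e; rewrite mem_cat => /orP [/sa|/flattenP [l /mapP [r hr ->] he]].
    by apply: (span_sub axR) => z hz; rewrite mem_cat hz.
  exact: hfsp r hr e he.
apply: leq_trans (dim_mono axN (g := Wmul (a ++ fb) ys) _) _.
  by move=> x /allpairsP [[e y] [/= he hy ->]]; apply: lin_mul (hG e he) hy.
rewrite /Wmul allpairs_cat.
apply: leq_trans (dim_cat_le axN _ _) _.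
rewrite size_allpairs; apply: leq_add.
  apply: (dim_mono axN) => x /allpairsP [[e y] [/= he hy ->]].
  by apply: (span_mem axN); apply: (allpairs_f (fun w y => w *: y)) (asub _ he) hy.
by rewrite mulnC leq_mul2l hfs orbT.
Qed.

Lemma key : (Defs.dim_span KsQ (Wmul Wn qs) + Defs.dim_span KsN (Wmul Wn zs) <=
  Defs.dim_span KsN (Wmul Wn ys) + size ys * \sum_(r <- rs) (dR (Fr r ++ Wn) - dR Wn))%N.
Proof. exact: leq_trans rank_nullity dimT_le. Qed.

End Main.


Section Real.
Variable Rl : realType.

Lemma sum_le (l : seq nat) (f : nat -> Rl) e : (forall d, d \in l -> f d <= e) ->
  \sum_(d <- l) f d <= (size l)%:R * e.
Proof.
elim: l => [|x l IH] h; first by rewrite big_nil mul0r.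
rewrite big_cons /= -natr1 mulrDl mul1r addrC.
apply: lerD; last by apply: h; rewrite mem_head.
by apply: IH => d hd; apply: h; rewrite inE hd orbT.
Qed.

Lemma real_step (A B C s b : nat) (ds : seq nat) (e : Rl) : (0 < b)%N ->
  (A + B <= C + s * \sum_(d <- ds) (d - b))%N ->
  (forall d, d \in ds -> b <= d)%N ->
  (forall d, d \in ds -> Defs.ratio Rl d b - 1 < e) ->
  Defs.ratio Rl A b + Defs.ratio Rl B b <= Defs.ratio Rl C b + s%:R * ((size ds)%:R * e).
Proof.
move=> hb hn hds he.
have hbR : (0 : Rl) < b%:R by rewrite ltr0n.
have h1 : ((A + B)%:R : Rl) <= C%:R + s%:R * \sum_(d <- ds) (d%:R - b%:R).
  rewrite (eq_big_seq (fun d => ((d - b)%N)%:R)); last first.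
    by move=> d hd; rewrite natrB // hds.
  by rewrite -natr_sum -natrM -natrD ler_nat.
rewrite /Defs.ratio -mulrDl -natrD.
have hinv : (0:Rl) <= b%:R^-1 by rewrite invr_ge0 ltW.
apply: le_trans (ler_wpM2r hinv h1) _.
rewrite mulrDl -mulrA mulr_suml lerD2l.
apply: ler_wpM2l; first by rewrite ler0n.
apply: sum_le => d hd; rewrite mulrBl divff ?gt_eqF //.
exact: ltW (he d hd).
Qed.

End Real.

Theorem corollary2 (K : fieldType) (R : algType K) (Rl : realType)
    (W : nat -> seq R) (U : (nat -> Prop) -> Prop)
    (Haff : affine R) (HW : folner_exhaustion Rl W) (HU : ultrafilter_nat U)
    (N Q : lmodType R) (M : N -> Prop) (pi : N -> Q)
    (HM : is_submodule M) (Hpi : is_quotient_map M pi)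
    (ys : seq N) (qs : seq Q) (zs : seq N)
    (Hys : generates ys) (Hqs : generates qs) (Hzs : generates_sub M zs)
    (rN rQ rM : Rl)
    (HrN : is_ulim U (rank_seq Rl W ys) rN)
    (HrQ : is_ulim U (rank_seq Rl W qs) rQ)
    (HrM : is_ulim U (rank_seq Rl W zs) rM) :
  rQ + rM <= rN.
Proof.
case: Hpi => piD piZ psurj pker.
have [cf hcf] := choice Hys.
have [pre hpre] := choice psurj.
set rs := flatten [seq cf x | x <- zs ++ map pre qs].
have hgood : forall x, x \in zs ++ map pre qs -> good rs ys x.
  move=> x hx; have [h1 h2] := hcf x; exists (cf x); split=> // r hr.
  by apply/flattenP; exists (cf x) => //; apply: map_f.
have hzg : forall z, z \in zs -> good rs ys z /\ pi z = 0.
  move=> z hz; split; first by apply: hgood; rewrite mem_cat hz.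
  by apply/pker; case: Hzs => h _; apply: h.
have hqg : forall q, q \in qs -> exists x, good rs ys x /\ pi x = q.
  move=> q hq; exists (pre q); split=> //; apply: hgood.
  by rewrite mem_cat map_f ?orbT.
have hkey := fun n => key piD piZ (W n) hzg hqg.
case: HW => _ _ hF.
have [n1 hn1] : exists n1, forall n, (n1 <= n)%N -> (0 < Defs.dim_span *:%R (W n))%N.
  have [n1 h] := hF 0 1 ltr01; exists n1 => n hn; have := h n hn.
  case: posnP => // ->.
  by rewrite /Defs.ratio invr0 mulr0 sub0r normrN normr1 ltxx.
apply/ler_addgt0Pr => eps heps.
have hP : (0 : Rl) <= (size ys)%:R * (size rs)%:R by rewrite mulr_ge0 ?ler0n.
set P := (size ys)%:R * (size rs)%:R in hP.
have hC : (0 : Rl) < 3 + P by lra.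
set e := eps / (3 + P).
have he : 0 < e by rewrite divr_gt0.
have hCe : (3 + P) * e = eps by rewrite /e mulrC divfK // gt_eqF.
have cof : forall l : seq R, exists n2, forall n, (n2 <= n)%N -> forall r, r \in l ->
   `|Defs.ratio Rl (Defs.dim_span *:%R ([seq w * r | w <- W n] ++ W n))
        (Defs.dim_span *:%R (W n)) - 1| < e.
  elim=> [|r l [m hm]]; first by exists 0%N.
  have [m' hm'] := hF r e he; exists (maxn m m') => n; rewrite geq_max => /andP [h1 h2] r'.
  by rewrite inE => /orP [/eqP ->|hr']; [apply: hm'|apply: hm].
have [n2 hn2] := cof rs.
pose A := fun n => [/\ `|rank_seq Rl W qs n - rQ| < e, `|rank_seq Rl W zs n - rM| < e,
   `|rank_seq Rl W ys n - rN| < e & (maxn n1 n2 <= n)%N].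
have hUA : U A.
  have h12 := uf_cap HU (uf_cap HU (HrQ e he) (HrM e he)) (uf_cap HU (HrN e he) (uf_free HU (maxn n1 n2))).
  by apply: (uf_up HU _ h12) => n [[? ?] [? ?]]; split.
have [n [hq hz hy hn]] : exists n, A n.
  case: (pselect (exists n, A n)) => // hno; exfalso; apply: (uf_proper HU).
  by apply: (uf_up HU _ hUA) => n hn; apply: hno; exists n.
rewrite geq_max in hn; case/andP: hn => hn1' hn2'.
have hb := hn1 n hn1'.
have hk := hkey n.
rewrite -(big_map (fun r => Defs.dim_span *:%R (Fr (W n) r ++ W n)) xpredT
   (fun d => (d - Defs.dim_span *:%R (W n))%N)) in hk.
have hstep := real_step (e := e) hb hk.
rewrite size_map in hstep.
have hs1 : forall d, d \in [seq Defs.dim_span *:%R (Fr (W n) r ++ W n) | r <- rs] ->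
    (Defs.dim_span *:%R (W n) <= d)%N.
  move=> d /mapP [r hr ->]; have := @dim_mono _ _ _ (@axRR K R) (W n) (Fr (W n) r ++ W n); apply => x hx.
  by apply: (span_mem (@axRR K R)); rewrite mem_cat hx orbT.
have hs2 : forall d, d \in [seq Defs.dim_span *:%R (Fr (W n) r ++ W n) | r <- rs] ->
    Defs.ratio Rl d (Defs.dim_span *:%R (W n)) - 1 < e.
  move=> d /mapP [r hr ->]; exact: le_lt_trans (ler_norm _) (hn2 n hn2' r hr).
have {hs1 hs2 hstep} hst := hstep hs1 hs2.
rewrite mulrA -/P in hst.
rewrite /rank_seq in hq hz hy.
move: hq hz hy; rewrite !ltr_norml => /andP [hq1 hq2] /andP [hz1 hz2] /andP [hy1 hy2].
rewrite mulrDl in hCe.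
set Pe := P * e in hst hCe.
lra.
Qed.
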